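(* Let $n\ge 2$, $l\in\{1,\dots,n\}$ and $m=l(n-1)$. Among all simple directed graphs with $n$ vertices and $m$ arcs, the maximal algebraic connectivity is $l$, and it is achieved by any graph that is the union of $l$ simple $n$-vertex directed stars rooted at $l$ distinct vertices.
   Context: A simple directed graph has no self-arcs and no repeated arcs; an arc $(j,i)$ goes from $j$ to $i$. The (in-degree) Laplacian of $\mathbb G$ on vertices $\{1,\dots,n\}$ is $L(\mathbb G)=D-A$, $D$ the diagonal matrix of in-degrees, $A_{ij}=1$ if $(j,i)$ is an arc and $0$ otherwise. The algebraic connectivity is the second smallest real part among the $n$ eigenvalues of $L(\mathbb G)$ counted with algebraic multiplicity. The $n$-vertex directed star rooted at vertex $r$ is the graph on $\{1,\dots,n\}$ whose arcs are $(r,j)$ for all $j\ne r$. The union of graphs on the same vertex set is the graph on that vertex set whose arc set is the union of their arc sets. *)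

(* Defs.v *)
From mathcomp Require Import all_boot all_order all_algebra all_field.
Set Implicit Arguments. Unset Strict Implicit. Unset Printing Implicit Defensive.
Import Order.TTheory GRing.Theory Num.Theory.
Local Open Scope ring_scope.

(* A directed graph on the vertex set 'I_n is given by its arc set:
   (j, i) \in E means there is an arc from j to i. *)
Definition digraph (n : nat) := {set 'I_n * 'I_n}.

(* simple: no self-arcs (repeated arcs are impossible for a set of arcs) *)
Definition simple_digraph n (E : digraph n) : bool :=
  [forall j : 'I_n, (j, j) \notin E].

Definition indeg n (E : digraph n) (i : 'I_n) : nat :=
  #|[set j : 'I_n | (j, i) \in E]|.

Definition laplacian n (E : digraph n) : 'M[algC]_n :=
  \matrix_(i, j) ((if i == j then (indeg E i)%:R else 0)
                  - (if (j, i) \in E then 1 else 0)).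

(* eigenvalues with algebraic multiplicity: the roots of the characteristic
   polynomial (a monic polynomial over the algebraically closed field algC) *)
Definition eigenvalues n (M : 'M[algC]_n) : seq algC :=
  sval (closed_field_poly_normal (char_poly M)).

Definition alg_connectivity n (E : digraph n) : algC :=
  nth 0 (sort <=%R (map (fun z => 'Re z) (eigenvalues (laplacian E)))) 1.

Definition dstar n (r : 'I_n) : digraph n :=
  [set p | (p.1 == r) && (p.2 != r)].

Definition star_union n (S : {set 'I_n}) : digraph n :=
  \bigcup_(r in S) dstar r.

(* Main.v *)
Require Import Defs.
From mathcomp Require Import all_boot all_order all_algebra all_field zify.
Import Order.TTheory GRing.Theory Num.Theory.
Local Open Scope ring_scope.

Section Gen.
Variables (n : nat) (A : 'M[algC]_n).

Lemma eigs_prod : char_poly A = \prod_(z <- eigenvalues A) ('X - z%:P).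
Proof.
rewrite /eigenvalues; case: closed_field_poly_normal => s /= {1}->.
by rewrite (monicP (char_poly_monic A)) scale1r.
Qed.

Lemma eigs_size : size (eigenvalues A) = n.
Proof.
by have := size_char_poly A; rewrite eigs_prod size_prod_XsubC => -[].
Qed.

Lemma eigs_sum : (0 < n)%N -> \sum_(z <- eigenvalues A) z = \tr A.
Proof.
move=> n0; apply: oppr_inj; rewrite -char_poly_trace // eigs_prod.
by rewrite -coefPn_prod_XsubC eigs_size // -lt0n.
Qed.

Lemma eigs_eigenvalue z : z \in eigenvalues A -> eigenvalue A z.
Proof. by rewrite eigenvalue_root_char eigs_prod root_prod_XsubC. Qed.

Lemma eigs0 : \det A = 0 -> 0 \in eigenvalues A.
Proof.
move=> dA; rewrite -root_prod_XsubC -eigs_prod /root horner_coef0.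
by rewrite char_poly_det dA mulr0.
Qed.
End Gen.
Lemma card_pair n (E : digraph n) :
  #|E| = (\sum_(j : 'I_n) \sum_(i : 'I_n) ((j, i) \in E : nat))%N.
Proof.
rewrite pair_big /= -sum1_card big_mkcond /=.
by apply: eq_bigr => -[j i] _ /=; case: ifP.
Qed.

Lemma indeg_sum n (i : 'I_n) (E : digraph n) :
  indeg E i = (\sum_(j : 'I_n) ((j, i) \in E : nat))%N.
Proof.
rewrite /indeg -sum1_card big_mkcond /=.
by apply: eq_bigr => j _; rewrite inE; case: ifP.
Qed.

Lemma sum_indeg n (E : digraph n) : (\sum_i indeg E i)%N = #|E|.
Proof.
rewrite card_pair exchange_big /=; apply: eq_bigr => i _.
by rewrite indeg_sum.
Qed.

Lemma tr_lap n (E : digraph n) : simple_digraph E -> \tr (laplacian E) = #|E|%:R.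
Proof.
move=> /forallP sE; rewrite /mxtrace -sum_indeg natr_sum; apply: eq_bigr => i _.
by rewrite mxE eqxx (negbTE (sE i)) subr0.
Qed.

Lemma det_lap n (E : digraph n) : (0 < n)%N -> \det (laplacian E) = 0.
Proof.
move=> n0; rewrite -det_tr; apply/eqP/det0P; exists (const_mx 1).
  by apply/negP => /eqP/rowP/(_ (Ordinal n0)); rewrite !mxE => /eqP; rewrite oner_eq0.
apply/rowP => j; rewrite !mxE.
under eq_bigr do rewrite !mxE mul1r.
rewrite sumrB (bigD1 j) //= eqxx big1 => [|i /negbTE]; last by rewrite eq_sym => ->.
rewrite addr0 indeg_sum natr_sum; apply/eqP; rewrite subr_eq0; apply/eqP.
by apply: eq_bigr => i _; case: ifP.
Qed.
Lemma sum_ge (b : algC) (w : seq algC) : all (fun x => b <= x) w ->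
  b *+ size w <= \sum_(x <- w) x.
Proof.
elim: w => [|x w IH] /=; first by rewrite big_nil.
by move=> /andP[bx /IH]; rewrite big_cons mulrS; apply: lerD.
Qed.

Lemma second_le (u : seq algC) (k : nat) (c : algC) : 0 <= c ->
  sorted <=%R u -> 0 \in u -> size u = k.+2 ->
  \sum_(x <- u) x = c *+ k.+1 -> nth 0 u 1 <= c.
Proof.
move=> c0; case: u => [|a [|b w]] //= /andP[ab pw] u0 [sw].
have bw := order_path_min (@le_trans _ _) pw.
case: (boolP (0 \in b :: w)) => [|nb].
  rewrite in_cons => /orP[/eqP <- //|/(allP bw) b0] _.
  exact: le_trans b0 c0.
move: u0; rewrite in_cons (negbTE nb) orbF => /eqP <-.
rewrite !big_cons add0r => eqs.
rewrite -(ler_pMn2r (ltn0Sn k)) -eqs -[in b *+ _]sw.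
have := @sum_ge b (b :: w); rewrite big_cons /= lexx /=; exact.
Qed.

Lemma sorted_u (s : seq algC) : sorted <=%R (sort <=%R (map (fun z => 'Re z) s)).
Proof.
apply: (@sort_sorted_in _ Num.real) => [x y xr yr|]; first exact: real_leVge.
by apply/allP => x /mapP [z _ ->]; exact: Creal_Re.
Qed.

Lemma part1 n (E : digraph n) l : (2 <= n)%N -> simple_digraph E ->
  #|E| = (l * (n - 1))%N -> alg_connectivity E <= l%:R.
Proof.
move=> n2 sE cE; rewrite /alg_connectivity.
have n0 : (0 < n)%N by apply: leq_trans n2.
set k := (n - 2)%N.
have nk : n = k.+2 by rewrite /k; lia.
apply: (@second_le _ k); first exact: ler0n.
- exact: sorted_u.
- rewrite mem_sort; apply/mapP; exists 0.
    by apply: eigs0; exact: det_lap.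
  by rewrite raddf0.
- by rewrite size_sort size_map eigs_size.
rewrite (perm_big _ (permEl (perm_sort _ _))) big_map -raddf_sum eigs_sum //.
rewrite tr_lap // cE; have ->: ((n - 1) = k.+1)%N by rewrite /k; lia.
by rewrite natrM mulr_natr; apply/Creal_ReP; rewrite rpredMn ?realn.
Qed.
Lemma sum_count (s : seq algC) c : (forall z, z \in s -> z = 0 \/ z = c) ->
  \sum_(z <- s) z = c *+ count (fun z => z != 0) s.
Proof.
elim: s => [|x s IH] H; first by rewrite big_nil.
rewrite big_cons /= IH => [|z zs]; last by apply: H; rewrite in_cons zs orbT.
case: (H x (mem_head _ _)) => ->; first by rewrite eqxx add0r.
case: (eqVneq c 0) => [->|cn0]; first by rewrite !mul0rn addr0.
by rewrite /= add1n mulrS.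
Qed.

Lemma second_eq (s : seq algC) c k : 0 < c ->
  (forall z, z \in s -> z = 0 \/ z = c) -> size s = k.+2 ->
  \sum_(z <- s) z = c *+ k.+1 -> nth 0 (sort <=%R s) 1 = c.
Proof.
move=> c0 H ss; rewrite (@sum_count s c H) => /(mulrIn (lt0r_neq0 c0)) cnt.
have {cnt} cnt: count (predC (fun z => z != 0)) s = 1%N.
  have := count_predC (fun z => z != 0) s; rewrite ss cnt ?gt_eqF //; lia.
have Hu z : z \in sort <=%R s -> z = 0 \/ z = c by rewrite mem_sort; exact: H.
have cu : count (predC (fun z => z != 0)) (sort <=%R s) = 1%N.
  by rewrite (permP (permEl (perm_sort _ _))).
have su : sorted <=%R (sort <=%R s).
  apply: (@sort_sorted_in _ Num.real) => [x y xr yr|]; first exact: real_leVge.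
  apply/allP => x /H [->|->]; [exact: real0 | exact: gtr0_real].
have sz : size (sort <=%R s) = k.+2 by rewrite size_sort.
move: Hu cu su sz; case: (sort <=%R s) => [|a [|b w]] // Hu cu /= /andP[ab _] _.
case: (Hu b); rewrite ?inE ?eqxx ?orbT // => b0.
exfalso; move: ab cu; rewrite b0; case: (Hu a); rewrite ?inE ?eqxx // => ->.
  by move=> _ /=; rewrite eqxx /=; lia.
by move=> cle0; have := lt_le_trans c0 cle0; rewrite ltxx.
Qed.

Lemma mem_star n (S : {set 'I_n}) p :
  (p \in star_union S) = (p.1 \in S) && (p.2 != p.1).
Proof.
apply/bigcupP/andP => [[r rS]|[pS ne]].
  by rewrite inE => /andP[/eqP e ne]; rewrite e.
by exists p.1 => //; rewrite inE eqxx.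
Qed.

Lemma simple_star n (S : {set 'I_n}) : simple_digraph (star_union S).
Proof. by apply/forallP => j; rewrite mem_star /= eqxx andbF. Qed.

Lemma card_star n (S : {set 'I_n}) : #|star_union S| = (#|S| * (n - 1))%N.
Proof.
rewrite card_pair.
transitivity (\sum_(j : 'I_n) ((j \in S) * (n - 1)))%N.
  apply: eq_bigr => j _; under eq_bigr do rewrite mem_star /=.
  case: (j \in S) => /=; last by rewrite big1.
  rewrite mul1n (bigD1 j) //= eqxx add0n.
  rewrite (eq_bigr (fun _ => 1%N)) => [|i ->] //.
  rewrite sum1dep_card subn1; have := cardC1 j; rewrite card_ord => <-.
  by apply: eq_card => i; rewrite !inE.
rewrite -sum1_card big_distrl /= [RHS]big_mkcond /=; apply: eq_bigr => j _; by case: (j \in S).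
Qed.

Lemma lap_star n (S : {set 'I_n}) i j : laplacian (star_union S) i j =
  (if i == j then #|S|%:R else 0) - (if j \in S then 1 else 0).
Proof.
rewrite mxE mem_star /=; case: eqVneq => [<-|ij]; last by rewrite andbT.
rewrite andbF subr0 /indeg.
have ->: [set j | (j, i) \in star_union S] = S :\ i.
  by apply/setP => k; rewrite !inE mem_star /= andbC eq_sym.
have h : #|S| = ((i \in S) + #|S :\ i|)%N by exact: cardsD1.
rewrite h natrD.
by case: (i \in S); rewrite /= ?add0r ?subr0 // mulr1n addrAC subrr add0r.
Qed.

Lemma eig_star n (S : {set 'I_n}) z :
  eigenvalue (laplacian (star_union S)) z -> z = 0 \/ z = #|S|%:R.
Proof.
case/eigenvalueP => v vL vn0.
set l : algC := #|S|%:R; set sg := \sum_i v 0 i.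
have Hk k : z * v 0 k = l * v 0 k - sg * (if k \in S then 1 else 0).
  have := congr1 (fun M : 'rV[algC]_n => M 0 k) vL; rewrite !mxE => <-.
  under eq_bigr do rewrite lap_star mulrBr.
  rewrite sumrB -mulr_suml (bigD1 k) //= eqxx big1 ?addr0 => [|i /negbTE ->]; last by rewrite mulr0.
  by rewrite mulrC.
have zs : z * sg = 0.
  have : \sum_k z * v 0 k = \sum_k (l * v 0 k - sg * (if k \in S then 1 else 0)).
    by apply: eq_bigr => k _; exact: Hk.
  rewrite -mulr_sumr sumrB -mulr_sumr -mulr_sumr -big_mkcond sumr_const /= -/sg => ->.
  by rewrite mulrC subrr.
have := introT eqP zs; rewrite mulf_eq0 => /orP[/eqP z0|/eqP sg0]; [by left|right].
have [k vk] : exists k, v 0 k != 0.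
  apply/existsP; apply: contraR vn0 => /existsPn H; apply/eqP/rowP => k.
  by rewrite mxE; apply/eqP; move/negbNE: (H k).
by apply: (mulIf vk); rewrite Hk sg0 mul0r subr0.
Qed.

Lemma part3 n (S : {set 'I_n}) : (2 <= n)%N -> (0 < #|S|)%N ->
  alg_connectivity (star_union S) = #|S|%:R.
Proof.
move=> n2 S0; rewrite /alg_connectivity.
set s := eigenvalues _.
have H z : z \in s -> z = 0 \/ z = #|S|%:R.
  by move=> /eigs_eigenvalue; exact: eig_star.
have ->: map (fun z => 'Re z) s = s.
  rewrite -[RHS]map_id; apply/eq_in_map => z /H [->|->]; rewrite ?raddf0 //.
  by apply/Creal_ReP; exact: realn.
apply: (@second_eq _ _ (n - 2)).
- by rewrite ltr0n.
- exact: H.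
- by rewrite eigs_size; lia.
rewrite eigs_sum; last by lia.
rewrite tr_lap ?simple_star // card_star natrM mulr_natr; congr (_ *+ _); lia.
Qed.

Theorem theorem3 (n l : nat) (hn : (2 <= n)%N) (hl1 : (1 <= l)%N) (hln : (l <= n)%N) :
  (forall E : digraph n, simple_digraph E -> #|E| = (l * (n - 1))%N ->
     alg_connectivity E <= l%:R)
  /\ (exists E : digraph n, [/\ simple_digraph E, #|E| = (l * (n - 1))%N &
        alg_connectivity E = l%:R])
  /\ (forall S : {set 'I_n}, #|S| = l ->
        [/\ simple_digraph (star_union S), #|star_union S| = (l * (n - 1))%N &
            alg_connectivity (star_union S) = l%:R]).
Proof.
have p3 (S : {set 'I_n}) : #|S| = l ->
    [/\ simple_digraph (star_union S), #|star_union S| = (l * (n - 1))%N &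
        alg_connectivity (star_union S) = l%:R].
  move=> HS; split; first exact: simple_star.
    by rewrite card_star HS.
  by rewrite part3 ?HS.
split; first by move=> E sE cE; exact: part1.
split; last exact: p3.
pose S : {set 'I_n} := [set widen_ord hln i | i : 'I_l].
have cS : #|S| = l.
  rewrite card_imset ?card_ord // => i j /(congr1 val) /= e; exact: val_inj.
by exists (star_union S); apply: p3.
Qed.
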